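(* Assume $\mu$ satisfies $(\mathrm H_\mu)$ and define $\ell$, $Q_n$, $V_\star$ as in the context. There is a constant $C>0$ such that for every $n\ge1$, \[ n<V_\star(Q_n)<n-C\ln V_\star^{-1}(n). \]
   Context: Condition $(\mathrm H_\mu)$: $\mu=(\mu_k)_{k\ge0}$ is a probability measure on $\mathbb Z_+$ with $\sum_k k\mu_k=1$, and there is a slowly varying function $L:\mathbb R_+\to\mathbb R_+$ with $\mu_n=L(n)/n^2$ for all $n\ge1$. Let $G_\mu(s)=\sum_k\mu_ks^k$, and for $s\in(0,1]$ let $\ell(s)=\big(G_\mu(1-s)-(1-s)\big)/s$ (positive and increasing, with $\ell(s)\to0$ as $s\downarrow0$). Let $Q_n=\mathbf P(\mathcal H\ge n)$ where $\mathcal H$ is the height of a $\mu$-Bienaymé (Galton–Watson) tree. For $y\in(0,1]$ let $V_\star(y)=\int_y^1\frac{\mathrm dx}{x\ell(x)}$, a decreasing bijection from $(0,1]$ onto $[0,\infty)$, and $V_\star^{-1}$ its inverse. *)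

(* Defs.v *)
From Stdlib Require Import Reals.
From Coquelicot Require Import Coquelicot.
From mathcomp Require Import classical_sets reals measure lebesgue_measure Rstruct.

Open Scope R_scope.

Definition slowly_varying (L : R -> R) : Prop :=
  (forall x, 0 < x -> 0 < L x) /\
  measurable_fun (@setT (R : realType)) (L : (R : realType) -> (R : realType)) /\
  (forall lam, 0 < lam ->
     is_lim (fun x => L (lam * x) / L x) p_infty 1).

Definition H_mu (mu : nat -> R) : Prop :=
  (forall k, 0 <= mu k) /\
  is_series mu 1 /\
  is_series (fun k => INR k * mu k) 1 /\
  exists L : R -> R, slowly_varying L /\
    forall n : nat, (1 <= n)%nat -> mu n = L (INR n) / (INR n ^ 2).

Definition G_mu (mu : nat -> R) (s : R) : R := Series (fun k => mu k * s ^ k).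

Definition ell (mu : nat -> R) (s : R) : R := (G_mu mu (1 - s) - (1 - s)) / s.

(* Q_n = P(height >= n) of a mu-Bienayme tree; P(height < n) = P(Z_n = 0)
   is the n-fold iterate of G_mu evaluated at 0. *)
Definition Q (mu : nat -> R) (n : nat) : R := 1 - Nat.iter n (G_mu mu) 0.

Definition V_star (mu : nat -> R) (y : R) : R :=
  RInt (fun x => 1 / (x * ell mu x)) y 1.

(* Main.v *)
Require Import Defs.
From Stdlib Require Import Reals.
From Coquelicot Require Import Coquelicot.
From Stdlib Require Import Lra Lia.
Open Scope R_scope.


Definition ff (e : R -> R) (x : R) : R := 1 / (x * e x).
Definition VV (e : R -> R) (y : R) : R := RInt (ff e) y 1.
Fixpoint qq (e : R -> R) (n : nat) : R :=
  match n with O => 1 | S n => qq e n * (1 - e (qq e n)) end.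

Lemma scal_RR (a b : R) : scal a b = a * b.
Proof. reflexivity. Qed.

Lemma ff_cont e (H1 : forall s, 0 < s <= 1 -> 0 < e s)
  (H7 : forall x, 0 < x <= 1 -> continuity_pt e x) x :
  0 < x <= 1 -> continuity_pt (ff e) x.
Proof.
  intros Hx. unfold ff.
  apply (continuity_pt_div (fun _ => 1) (fun x => x * e x)).
  - apply continuity_pt_const. intros a b; reflexivity.
  - apply (continuity_pt_mult (fun x => x) e). apply continuity_pt_id. now apply H7.
  - specialize (H1 x Hx). nra.
Qed.

Lemma ff_exRInt e (H1 : forall s, 0 < s <= 1 -> 0 < e s)
  (H7 : forall x, 0 < x <= 1 -> continuity_pt e x) a b :
  0 < a -> a <= b -> b <= 1 -> ex_RInt (ff e) a b.
Proof.
  intros Ha Hab Hb. apply (ex_RInt_continuous (V:=R_CompleteNormedModule)). intros z Hz.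
  rewrite Rmin_left in Hz by lra. rewrite Rmax_right in Hz by lra.
  apply continuity_pt_filterlim. apply ff_cont; auto; lra.
Qed.

Lemma ff_pos e (H1 : forall s, 0 < s <= 1 -> 0 < e s) x : 0 < x <= 1 -> 0 < ff e x.
Proof. intros Hx. unfold ff. specialize (H1 x Hx). apply Rdiv_lt_0_compat; nra. Qed.

Lemma ff_dec e (H1 : forall s, 0 < s <= 1 -> 0 < e s)
  (H2 : forall s t, 0 < s -> s <= t -> t <= 1 -> e s <= e t) x z :
  0 < x -> x < z -> z <= 1 -> ff e z < ff e x.
Proof.
  intros Hx Hxz Hz. unfold ff.
  assert (A := H1 x ltac:(lra)). assert (B := H2 x z ltac:(lra) ltac:(lra) Hz). assert (C := H1 z ltac:(lra)).
  unfold Rdiv. rewrite !Rmult_1_l. apply Rinv_lt_contravar. apply Rmult_lt_0_compat; nra. apply Rle_lt_trans with (x * e z). apply Rmult_le_compat_l; lra. apply Rmult_lt_compat_r; lra.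
Qed.

Lemma ff_le e (H1 : forall s, 0 < s <= 1 -> 0 < e s)
  (H2 : forall s t, 0 < s -> s <= t -> t <= 1 -> e s <= e t) x z :
  0 < x -> x <= z -> z <= 1 -> ff e z <= ff e x.
Proof.
  intros Hx Hxz Hz. destruct (Req_dec x z) as [->|Hne]. lra.
  left. apply ff_dec; auto; lra.
Qed.

Lemma VV_diff e (H1 : forall s, 0 < s <= 1 -> 0 < e s)
  (H7 : forall x, 0 < x <= 1 -> continuity_pt e x) a b :
  0 < a -> a <= b -> b <= 1 -> VV e a - VV e b = RInt (ff e) a b.
Proof.
  intros Ha Hab Hb. unfold VV.
  rewrite <- (RInt_Chasles (ff e) a b 1).
  - change (plus (RInt (ff e) a b) (RInt (ff e) b 1)) with (RInt (ff e) a b + RInt (ff e) b 1). ring.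
  - apply ff_exRInt; auto.
  - apply ff_exRInt; auto; lra.
Qed.

Lemma VV_1 e : VV e 1 = 0.
Proof. unfold VV. rewrite RInt_point. reflexivity. Qed.

Lemma rint_upper e (H1 : forall s, 0 < s <= 1 -> 0 < e s)
  (H2 : forall s t, 0 < s -> s <= t -> t <= 1 -> e s <= e t)
  (H7 : forall x, 0 < x <= 1 -> continuity_pt e x) a b :
  0 < a -> a <= b -> b <= 1 -> RInt (ff e) a b <= (b - a) * ff e a.
Proof.
  intros Ha Hab Hb.
  replace ((b - a) * ff e a) with (RInt (fun _ => ff e a) a b)
    by (rewrite RInt_const; reflexivity).
  apply RInt_le; auto. apply ff_exRInt; auto. apply ex_RInt_const.
  intros x Hx. apply ff_le; auto; lra.
Qed.

Lemma rint_lower e (H1 : forall s, 0 < s <= 1 -> 0 < e s)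
  (H2 : forall s t, 0 < s -> s <= t -> t <= 1 -> e s <= e t)
  (H7 : forall x, 0 < x <= 1 -> continuity_pt e x) a b :
  0 < a -> a <= b -> b <= 1 -> (b - a) * ff e b <= RInt (ff e) a b.
Proof.
  intros Ha Hab Hb.
  replace ((b - a) * ff e b) with (RInt (fun _ => ff e b) a b)
    by (rewrite RInt_const; reflexivity).
  apply RInt_le; auto. apply ex_RInt_const. apply ff_exRInt; auto.
  intros x Hx. apply ff_le; auto; lra.
Qed.

Lemma rint_lower_strict e (H1 : forall s, 0 < s <= 1 -> 0 < e s)
  (H2 : forall s t, 0 < s -> s <= t -> t <= 1 -> e s <= e t)
  (H7 : forall x, 0 < x <= 1 -> continuity_pt e x) a b :
  0 < a -> a < b -> b <= 1 -> (b - a) * ff e b < RInt (ff e) a b.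
Proof.
  intros Ha Hab Hb. set (m := (a + b) / 2).
  rewrite <- (RInt_Chasles (ff e) a m b).
  2,3: apply ff_exRInt; unfold m; auto; lra.
  change (plus (RInt (ff e) a m) (RInt (ff e) m b)) with (RInt (ff e) a m + RInt (ff e) m b).
  assert (L1 := rint_lower e H1 H2 H7 a m Ha ltac:(unfold m; lra) ltac:(unfold m; lra)).
  assert (L2 := rint_lower e H1 H2 H7 m b ltac:(unfold m; lra) ltac:(unfold m; lra) Hb).
  assert (D := ff_dec e H1 H2 m b ltac:(unfold m; lra) ltac:(unfold m; lra) Hb).
  assert (Hm : 0 < m - a) by (unfold m; lra).
  nra.
Qed.

Lemma rint_ln e (H1 : forall s, 0 < s <= 1 -> 0 < e s)
  (H2 : forall s t, 0 < s -> s <= t -> t <= 1 -> e s <= e t)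
  (H7 : forall x, 0 < x <= 1 -> continuity_pt e x) a b :
  0 < a -> a <= b -> b <= 1 -> (ln b - ln a) / e b <= RInt (ff e) a b.
Proof.
  intros Ha Hab Hb.
  assert (Eb := H1 b ltac:(lra)).
  assert (HR : is_RInt (fun x => / x * / e b) a b (minus (ln b / e b) (ln a / e b))).
  { apply (is_RInt_derive (fun x => ln x / e b)).
    - intros x Hx. rewrite Rmin_left in Hx by lra. rewrite Rmax_right in Hx by lra.
      auto_derive. lra. field. lra.
    - intros x Hx. rewrite Rmin_left in Hx by lra. rewrite Rmax_right in Hx by lra.
      apply continuity_pt_filterlim.
      apply (continuity_pt_mult (fun x => / x) (fun _ => / e b)).
      apply continuity_pt_inv. apply continuity_pt_id. lra.
      apply continuity_pt_const. intros u v; reflexivity. }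
  assert (Heq : (ln b - ln a) / e b = RInt (fun x => / x * / e b) a b).
  { rewrite (is_RInt_unique _ _ _ _ HR). unfold minus, plus, opp; simpl. field. lra. }
  rewrite Heq. apply RInt_le; auto.
  - eexists; eauto.
  - apply ff_exRInt; auto.
  - intros x Hx. unfold ff. assert (Ex := H1 x ltac:(lra)).
    assert (Le := H2 x b ltac:(lra) ltac:(lra) Hb).
    unfold Rdiv. rewrite Rmult_1_l, Rinv_mult.
    apply Rmult_le_compat_l. left; apply Rinv_0_lt_compat; lra.
    apply Rinv_le_contravar; lra.
Qed.

Lemma ln_1mx x : 0 <= x < 1 -> x <= - ln (1 - x).
Proof.
  intros Hx. destruct (Req_dec x 0) as [->|Hne].
  - replace (1 - 0) with 1 by ring. rewrite ln_1. lra.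
  - assert (E := exp_ineq1 (- x) ltac:(lra)).
    assert (ln (1 - x) <= ln (exp (- x))) by (apply ln_le; lra).
    rewrite ln_exp in H. lra.
Qed.

Lemma div_le u v p q : 0 < p -> 0 < q -> u * q <= v * p -> u / p <= v / q.
Proof.
  intros Hp Hq H. apply Rmult_le_reg_r with (p * q). nra.
  replace (u / p * (p * q)) with (u * q) by (field; lra).
  replace (v / q * (p * q)) with (v * p) by (field; lra). exact H.
Qed.

Lemma qq_props e (H1 : forall s, 0 < s <= 1 -> 0 < e s)
  (H2 : forall s t, 0 < s -> s <= t -> t <= 1 -> e s <= e t) (H4 : e 1 < 1) n :
  0 < qq e n <= 1.
Proof.
  induction n as [|n IH]; simpl. lra.
  assert (A := H1 _ IH). assert (B := H2 (qq e n) 1 ltac:(lra) ltac:(lra) ltac:(lra)).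
  assert (0 < 1 - e (qq e n) <= 1) by lra.
  split. apply Rmult_lt_0_compat; lra.
  rewrite <- (Rmult_1_r 1). apply Rmult_le_compat; lra.
Qed.

Lemma step_bounds e (H1 : forall s, 0 < s <= 1 -> 0 < e s)
  (H2 : forall s t, 0 < s -> s <= t -> t <= 1 -> e s <= e t)
  (H3 : forall s t, 0 < s -> s <= t -> t <= 1 -> s * e t <= t * e s)
  (H4 : e 1 < 1)
  (H7 : forall x, 0 < x <= 1 -> continuity_pt e x) n :
  1 < VV e (qq e (S n)) - VV e (qq e n) /\
  VV e (qq e (S n)) - VV e (qq e n) <=
    1 + 2 / (1 - e 1) ^ 2 * (ln (qq e n) - ln (qq e (S n))).
Proof.
  assert (Hb := qq_props e H1 H2 H4 n).
  set (b := qq e n) in *. set (a := qq e (S n)).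
  assert (Ha : a = b * (1 - e b)) by reflexivity.
  assert (Eb := H1 b Hb).
  assert (Em := H2 b 1 ltac:(lra) ltac:(lra) ltac:(lra)).
  assert (Ha0 : 0 < a) by (rewrite Ha; apply Rmult_lt_0_compat; lra).
  assert (Hab : a < b) by (rewrite Ha; assert (0 < b * e b) by (apply Rmult_lt_0_compat; lra); lra).
  assert (Ea := H1 a ltac:(lra)).
  assert (Hd := VV_diff e H1 H7 a b Ha0 ltac:(lra) ltac:(lra)).
  rewrite Hd; clear Hd.
  assert (Hone : (b - a) * ff e b = 1).
  { rewrite Ha. unfold ff. field. split; lra. }
  split.
  - assert (S := rint_lower_strict e H1 H2 H7 a b Ha0 Hab ltac:(lra)). lra.
  - assert (U := rint_upper e H1 H2 H7 a b Ha0 ltac:(lra) ltac:(lra)).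
    set (x := e b) in *. set (m := e 1) in *. unfold ff in U |- *. set (ea := e a) in *.
    assert (H3' := H3 a b Ha0 ltac:(lra) ltac:(lra)). fold x in H3'.
    assert (K : (1 - x) * x <= ea).
    { apply Rmult_le_reg_l with b. lra. replace (b * ((1 - x) * x)) with (a * x) by (rewrite Ha; ring). exact H3'. }
    assert (E1 : (b - a) * (1 / (a * ea)) = x / ((1 - x) * ea)).
    { rewrite Ha. field. repeat split; lra. }
    assert (E2 : x / ((1 - x) * ea) <= 1 / (1 - x) ^ 2).
    { apply div_le. apply Rmult_lt_0_compat; lra. apply pow_lt; lra.
      assert (0 < 1 - x) by lra. nra. }
    assert (E3 : 1 / (1 - x) ^ 2 <= 1 + 2 / (1 - m) ^ 2 * x).
    { assert (P : 0 < (1 - x) ^ 2) by (apply pow_lt; lra).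
      apply Rmult_le_reg_r with ((1 - x) ^ 2). exact P.
      replace (1 / (1 - x) ^ 2 * (1 - x) ^ 2) with 1 by (field; lra).
      assert (Q1 : (1 - m) ^ 2 <= (1 - x) ^ 2) by (simpl; nra).
      assert (Q2 : 2 <= 2 / (1 - m) ^ 2 * (1 - x) ^ 2).
      { replace 2 with (2 / (1 - m) ^ 2 * (1 - m) ^ 2) at 1 by (field; lra).
        apply Rmult_le_compat_l. apply Rlt_le, Rdiv_lt_0_compat. lra. apply pow_lt; lra. exact Q1. }
      nra. }
    assert (E4 : x <= ln b - ln a).
    { rewrite Ha. rewrite ln_mult by lra. assert (T := ln_1mx x ltac:(lra)). lra. }
    assert (Bp : 0 <= 2 / (1 - m) ^ 2).
    { apply Rlt_le, Rdiv_lt_0_compat. lra. apply pow_lt; lra. }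
    nra.
Qed.

Lemma VV_mono e (H1 : forall s, 0 < s <= 1 -> 0 < e s)
  (H2 : forall s t, 0 < s -> s <= t -> t <= 1 -> e s <= e t)
  (H7 : forall x, 0 < x <= 1 -> continuity_pt e x) a b :
  0 < a -> a <= b -> b <= 1 -> VV e b <= VV e a.
Proof.
  intros Ha Hab Hb. assert (D := VV_diff e H1 H7 a b Ha Hab Hb).
  assert (L := rint_lower e H1 H2 H7 a b Ha Hab Hb).
  assert (P := ff_pos e H1 b ltac:(lra)). nra.
Qed.

Lemma VV_qq_lower e (H1 : forall s, 0 < s <= 1 -> 0 < e s)
  (H2 : forall s t, 0 < s -> s <= t -> t <= 1 -> e s <= e t)
  (H3 : forall s t, 0 < s -> s <= t -> t <= 1 -> s * e t <= t * e s)
  (H4 : e 1 < 1)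
  (H7 : forall x, 0 < x <= 1 -> continuity_pt e x) n :
  INR n <= VV e (qq e n) /\ INR (S n) < VV e (qq e (S n)).
Proof.
  induction n as [|n IH].
  - simpl qq at 1. rewrite VV_1. simpl INR.
    destruct (step_bounds e H1 H2 H3 H4 H7 0) as [L _]. simpl qq in L at 2.
    rewrite VV_1 in L. lra.
  - split. lra.
    destruct (step_bounds e H1 H2 H3 H4 H7 (S n)) as [L _].
    rewrite (S_INR (S n)). lra.
Qed.

Lemma VV_qq_upper e (H1 : forall s, 0 < s <= 1 -> 0 < e s)
  (H2 : forall s t, 0 < s -> s <= t -> t <= 1 -> e s <= e t)
  (H3 : forall s t, 0 < s -> s <= t -> t <= 1 -> s * e t <= t * e s)
  (H4 : e 1 < 1)
  (H7 : forall x, 0 < x <= 1 -> continuity_pt e x) n :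
  VV e (qq e n) <= INR n + 2 / (1 - e 1) ^ 2 * (- ln (qq e n)).
Proof.
  induction n as [|n IH].
  - simpl. rewrite VV_1, ln_1. lra.
  - destruct (step_bounds e H1 H2 H3 H4 H7 n) as [_ U].
    rewrite S_INR. lra.
Qed.

Lemma qq_ln e (H1 : forall s, 0 < s <= 1 -> 0 < e s)
  (H2 : forall s t, 0 < s -> s <= t -> t <= 1 -> e s <= e t) (H4 : e 1 < 1) n :
  0 <= - ln (qq e n) <= INR n * (- ln (1 - e 1)).
Proof.
  induction n as [|n IH].
  - simpl. rewrite ln_1. lra.
  - assert (Hq := qq_props e H1 H2 H4 n).
    assert (A := H1 _ Hq). assert (B := H2 (qq e n) 1 ltac:(lra) ltac:(lra) ltac:(lra)).
    simpl qq. rewrite ln_mult by lra. rewrite S_INR.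
    assert (ln (1 - e (qq e n)) <= 0) by (rewrite <- ln_1; apply ln_le; lra).
    assert (ln (1 - e 1) <= ln (1 - e (qq e n))) by (apply ln_le; lra).
    lra.
Qed.

Lemma abstract_main e (H1 : forall s, 0 < s <= 1 -> 0 < e s)
  (H2 : forall s t, 0 < s -> s <= t -> t <= 1 -> e s <= e t)
  (H3 : forall s t, 0 < s -> s <= t -> t <= 1 -> s * e t <= t * e s)
  (H4 : e 1 < 1)
  (H5 : forall d, 0 < d -> exists y0, 0 < y0 <= 1 /\ e y0 <= d)
  (H7 : forall x, 0 < x <= 1 -> continuity_pt e x) :
  exists C : R, 0 < C /\
    forall (n : nat) (y : R), (1 <= n)%nat -> 0 < y <= 1 -> VV e y = INR n ->
      INR n < VV e (qq e n) < INR n - C * ln y.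
Proof.
  set (m := e 1) in *.
  assert (Hm0 : 0 < m) by (apply H1; lra).
  set (B := 2 / (1 - m) ^ 2).
  assert (HB : 0 < B) by (apply Rdiv_lt_0_compat; [lra | apply pow_lt; lra]).
  set (d := / (2 * B)).
  assert (Hd : 0 < d) by (apply Rinv_0_lt_compat; lra).
  assert (HBd : B * d = / 2) by (unfold d; field; lra).
  destruct (H5 d Hd) as [y0 [Hy0 Ey0]].
  set (N0 := VV e y0).
  set (c := - ln (1 - m)).
  assert (Hc : 0 <= c).
  { unfold c. assert (ln (1 - m) <= 0) by (rewrite <- ln_1; apply ln_le; lra). lra. }
  set (fh := ff e (1/2)).
  assert (Hfh : 0 < fh) by (apply ff_pos; auto; lra).
  set (y1 := Rmax (1/2) (1 - / fh)).
  assert (Hy1 : 0 < y1 < 1).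
  { unfold y1. assert (0 < / fh) by (apply Rinv_0_lt_compat; lra).
    split. apply Rlt_le_trans with (1/2). lra. apply Rmax_l.
    apply Rmax_lub_lt; lra. }
  set (s1 := - ln y1).
  assert (Hs1 : 0 < s1).
  { unfold s1. assert (ln y1 < 0) by (rewrite <- ln_1; apply ln_increasing; lra). lra. }
  set (C := 2 * B + 1 + B * Rabs N0 * c / s1).
  assert (HC0 : 0 <= B * Rabs N0 * c / s1).
  { apply Rmult_le_pos. apply Rmult_le_pos. apply Rmult_le_pos. lra. apply Rabs_pos. lra.
    left; apply Rinv_0_lt_compat; lra. }
  exists C. split. unfold C; lra.
  intros n y Hn Hy HVy.
  assert (Hn1 : 1 <= INR n) by (apply (le_INR 1); exact Hn).
  destruct n as [|n']. lia.
  assert (Low := proj2 (VV_qq_lower e H1 H2 H3 H4 H7 n')).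
  assert (Up := VV_qq_upper e H1 H2 H3 H4 H7 (S n')).
  assert (Tq := qq_ln e H1 H2 H4 (S n')).
  assert (Hq := qq_props e H1 H2 H4 (S n')).
  set (n := S n') in *. fold m in Up, Tq. fold B in Up. fold c in Tq.
  set (q := qq e n) in *. set (t := - ln q) in *.
  split. exact Low.
  assert (Hyy1 : y <= y1).
  { destruct (Rle_or_lt y (1/2)) as [H|H].
    - apply Rle_trans with (1/2). exact H. apply Rmax_l.
    - apply Rle_trans with (1 - / fh); [| apply Rmax_r].
      assert (R1 := rint_upper e H1 H2 H7 y 1 ltac:(lra) ltac:(lra) ltac:(lra)).
      assert (R2 := ff_le e H1 H2 (1/2) y ltac:(lra) ltac:(lra) ltac:(lra)). fold fh in R2.
      unfold VV in HVy. rewrite HVy in R1.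
      assert (1 <= (1 - y) * fh) by nra.
      assert (/ fh <= 1 - y).
      { apply Rmult_le_reg_r with fh. lra. rewrite Rinv_l by lra. lra. }
      lra. }
  set (s := - ln y).
  assert (Hs : s1 <= s).
  { unfold s, s1. assert (ln y <= ln y1) by (apply ln_le; lra). lra. }
  replace (INR n - C * ln y) with (INR n + C * s) by (unfold s; ring).
  destruct (Rle_or_lt (e y) d) as [Ey | Ey].
  -
    assert (Hqy : q < y).
    { destruct (Rlt_or_le q y) as [H|H]. exact H.
      assert (M := VV_mono e H1 H2 H7 y q ltac:(lra) H ltac:(lra)). lra. }
    assert (Rl := rint_ln e H1 H2 H7 q y ltac:(lra) ltac:(lra) ltac:(lra)).
    rewrite <- (VV_diff e H1 H7 q y ltac:(lra) ltac:(lra) ltac:(lra)) in Rl.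
    rewrite HVy in Rl.
    assert (Eyp := H1 y Hy).
    assert (K1 : (t - s) / e y <= B * t).
    { replace ((t - s) / e y) with ((ln y - ln q) / e y) by (unfold t, s; field; lra). lra. }
    assert (K2 : t - s <= B * t * e y).
    { replace (t - s) with ((t - s) / e y * e y) by (field; lra).
      apply Rmult_le_compat_r; lra. }
    assert (K3 : B * t * e y <= B * t * d).
    { apply Rmult_le_compat_l. apply Rmult_le_pos; lra. exact Ey. }
    assert (K4 : B * t * d = t / 2) by (rewrite Rmult_assoc, (Rmult_comm t), <- Rmult_assoc, HBd; field).
    assert (t <= 2 * s) by lra.
    assert (Hsp : 0 < s) by lra.
    assert (B * t <= 2 * B * s) by nra.
    unfold C. nra.
  -
    assert (Hy0y : y0 < y).
    { destruct (Rlt_or_le y0 y) as [H|H]. exact H.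
      assert (e y <= e y0) by (apply H2; lra). lra. }
    assert (M := VV_mono e H1 H2 H7 y0 y ltac:(lra) ltac:(lra) ltac:(lra)).
    fold N0 in M. rewrite HVy in M.
    assert (T1 : t <= Rabs N0 * c).
    { apply Rle_trans with (INR n * c). lra.
      apply Rmult_le_compat_r. exact Hc. apply Rle_trans with N0. exact M. apply Rle_abs. }
    assert (T2 : B * t <= B * Rabs N0 * c).
    { rewrite Rmult_assoc. apply Rmult_le_compat_l; lra. }
    assert (T3 : B * Rabs N0 * c < C * s).
    { assert (Hsp : 0 < s) by lra.
      assert (EK : B * Rabs N0 * c = (B * Rabs N0 * c / s1) * s1) by (field; lra).
      assert (EC : C * s = (2 * B + 1) * s + (B * Rabs N0 * c / s1) * s) by (unfold C; ring).
      rewrite EC. rewrite EK at 1.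
      assert ((B * Rabs N0 * c / s1) * s1 <= (B * Rabs N0 * c / s1) * s) by (apply Rmult_le_compat_l; lra).
      assert (0 < (2 * B + 1) * s) by (apply Rmult_lt_0_compat; lra).
      lra. }
    lra.
Qed.

Fixpoint gg (k : nat) (s : R) : R :=
  match k with O => 0 | S k => gg k s + (1 - (1 - s) ^ k) end.
Fixpoint pp (j : nat) (s : R) : R :=
  match j with O => 0 | S j => pp j s + (1 - s) ^ j end.
Fixpoint qk (k : nat) (s : R) : R :=
  match k with O => 0 | S k => qk k s + pp k s end.

Lemma pow01 x k : 0 <= x <= 1 -> 0 <= x ^ k <= 1.
Proof.
  intros Hx. induction k as [|k IH]; simpl. lra.
  split. apply Rmult_le_pos; lra. rewrite <- (Rmult_1_r 1). apply Rmult_le_compat; lra.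
Qed.

Lemma gg_id k s : s * gg k s = (1 - s) ^ k - 1 + INR k * s.
Proof.
  induction k as [|k IH]; simpl gg. simpl; ring.
  rewrite S_INR. simpl pow. rewrite Rmult_plus_distr_l, IH. ring.
Qed.

Lemma pp_id j s : s * pp j s = 1 - (1 - s) ^ j.
Proof.
  induction j as [|j IH]; simpl pp. simpl; ring.
  simpl pow. rewrite Rmult_plus_distr_l, IH. ring.
Qed.

Lemma qk_id k s : s * qk k s = gg k s.
Proof.
  induction k as [|k IH]; simpl. ring.
  rewrite Rmult_plus_distr_l, IH, pp_id. ring.
Qed.

Lemma gg_bounds k s : 0 <= s <= 1 -> 0 <= gg k s <= INR k.
Proof.
  intros Hs. induction k as [|k IH]; simpl gg. simpl; lra.
  rewrite S_INR. assert (P := pow01 (1 - s) k ltac:(lra)). lra.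
Qed.

Lemma gg_mono k s t : 0 <= s -> s <= t -> t <= 1 -> gg k s <= gg k t.
Proof.
  intros H1 H2 H3. induction k as [|k IH]; simpl gg. lra.
  assert ((1 - t) ^ k <= (1 - s) ^ k) by (apply pow_incr; lra). lra.
Qed.

Lemma pp_anti j s t : 0 <= s -> s <= t -> t <= 1 -> pp j t <= pp j s.
Proof.
  intros H1 H2 H3. induction j as [|j IH]; simpl pp. lra.
  assert ((1 - t) ^ j <= (1 - s) ^ j) by (apply pow_incr; lra). lra.
Qed.

Lemma qk_anti k s t : 0 <= s -> s <= t -> t <= 1 -> qk k t <= qk k s.
Proof.
  intros H1 H2 H3. induction k as [|k IH]; simpl qk. lra.
  assert (pp k t <= pp k s) by (apply pp_anti; lra). lra.
Qed.

Lemma gg_ratio k s t : 0 < s -> s <= t -> t <= 1 -> s * gg k t <= t * gg k s.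
Proof.
  intros H1 H2 H3. rewrite <- (qk_id k t), <- (qk_id k s).
  assert (qk k t <= qk k s) by (apply qk_anti; lra).
  replace (s * (t * qk k t)) with ((s * t) * qk k t) by ring.
  replace (t * (s * qk k s)) with ((s * t) * qk k s) by ring.
  apply Rmult_le_compat_l. nra. lra.
Qed.

Lemma bernoulli j s : 0 <= s <= 1 -> 1 - INR j * s <= (1 - s) ^ j.
Proof.
  intros Hs. induction j as [|j IH]. simpl; lra.
  rewrite S_INR. simpl pow.
  assert (P : (1 - INR j * s) * (1 - s) <= (1 - s) ^ j * (1 - s)) by (apply Rmult_le_compat_r; lra).
  assert (0 <= INR j * s * s) by (apply Rmult_le_pos; [apply Rmult_le_pos; [apply pos_INR|]|]; lra).
  nra.
Qed.

Lemma gg_small k s : 0 <= s <= 1 -> gg k s <= INR k * INR k * s.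
Proof.
  intros Hs. induction k as [|k IH]; simpl gg. simpl; lra.
  rewrite S_INR. assert (B := bernoulli k s Hs).
  assert (0 <= INR k) by apply pos_INR. nra.
Qed.

Lemma gg2 s : gg 2 s = s.
Proof. simpl. ring. Qed.

Lemma psum_le (a : nat -> R) l N : (forall n, 0 <= a n) -> is_series a l -> sum_n a N <= l.
Proof.
  intros Ha Hs.
  assert (Hl : is_lim_seq (sum_n a) l) by exact Hs.
  assert (R := is_lim_seq_le_loc (fun _ => sum_n a N) (sum_n a) (sum_n a N) l).
  simpl in R. apply R; [| apply is_lim_seq_const | exact Hl].
  exists N. intros n Hn. induction n as [|n IH].
  - assert (N = 0%nat) by lia. subst. lra.
  - destruct (Nat.eq_dec N (S n)) as [->|Hne]. lra.
    rewrite sum_Sn. change (plus (sum_n a n) (a (S n))) with (sum_n a n + a (S n)).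
    specialize (IH ltac:(lia)). specialize (Ha (S n)). lra.
Qed.

Lemma ser_le (a b : nat -> R) la lb : (forall n, 0 <= a n <= b n) ->
  is_series a la -> is_series b lb -> la <= lb.
Proof.
  intros H Ha Hb. rewrite <- (is_series_unique _ _ Ha), <- (is_series_unique _ _ Hb).
  apply Series_le. exact H. eexists; eauto.
Qed.

Lemma ell_series mu (Hmu : H_mu mu) s : 0 < s <= 1 ->
  is_series (fun k => mu k * gg k s) (ell mu s).
Proof.
  intros Hs. destruct Hmu as [Hpos [Hs1 [Hs2 _]]].
  assert (HG : is_series (fun k => mu k * (1 - s) ^ k) (G_mu mu (1 - s))).
  { unfold G_mu. apply Series_correct.
    apply (ex_series_le (K:=R_AbsRing) (V:=R_CompleteNormedModule) _ mu). intros n.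
    change (norm (mu n * (1 - s) ^ n)) with (Rabs (mu n * (1 - s) ^ n)).
    assert (P := pow01 (1 - s) n ltac:(lra)). specialize (Hpos n).
    rewrite Rabs_pos_eq by (apply Rmult_le_pos; lra).
    rewrite <- (Rmult_1_r (mu n)) at 2. apply Rmult_le_compat_l; lra.
    eexists; eauto. }
  assert (H1 := is_series_scal_l (-1) _ _ Hs1).
  assert (H2 := is_series_scal_l s _ _ Hs2).
  assert (H3 := is_series_plus _ _ _ _ (is_series_plus _ _ _ _ HG H1) H2).
  assert (H4 := is_series_scal_l (/ s) _ _ H3).
  eapply is_series_ext; [| replace (ell mu s) with (scal (/ s)
      (plus (plus (G_mu mu (1 - s)) (scal (-1) 1)) (scal s 1))); [exact H4|] ].
  - intros n. change (/ s * ((mu n * (1 - s) ^ n + -1 * mu n) + s * (INR n * mu n)) = mu n * gg n s).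
    apply Rmult_eq_reg_l with s. 2: lra.
    rewrite <- Rmult_assoc, Rinv_r by lra.
    replace (s * (mu n * gg n s)) with (mu n * (s * gg n s)) by ring.
    rewrite gg_id. ring.
  - change (/ s * ((G_mu mu (1 - s) + -1 * 1) + s * 1) = ell mu s).
    unfold ell. field. lra.
Qed.

Lemma mu2_pos mu (Hmu : H_mu mu) : 0 < mu 2%nat.
Proof.
  destruct Hmu as [_ [_ [_ [L [[HL _] HE]]]]].
  rewrite HE by lia. apply Rdiv_lt_0_compat. apply HL. simpl; lra. simpl; lra.
Qed.

Lemma sum_n_2 (a : nat -> R) : sum_n a 2 = a 0%nat + a 1%nat + a 2%nat.
Proof. rewrite !sum_Sn, sum_O. reflexivity. Qed.

Lemma E1 mu (Hmu : H_mu mu) s : 0 < s <= 1 -> 0 < ell mu s.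
Proof.
  intros Hs.
  assert (Hn : forall n, 0 <= mu n * gg n s).
  { intros n. destruct Hmu as [Hp _]. apply Rmult_le_pos. apply Hp. apply gg_bounds; lra. }
  assert (P := psum_le _ _ 2 Hn (ell_series mu Hmu s Hs)).
  rewrite sum_n_2 in P. rewrite gg2 in P.
  assert (A0 : 0 <= mu 0%nat * gg 0 s) by (destruct Hmu as [Hp _]; apply Rmult_le_pos; [apply Hp|apply gg_bounds; lra]).
  assert (A1 : 0 <= mu 1%nat * gg 1 s) by (destruct Hmu as [Hp _]; apply Rmult_le_pos; [apply Hp|apply gg_bounds; lra]).
  assert (M := mu2_pos mu Hmu).
  assert (0 < mu 2%nat * s) by (apply Rmult_lt_0_compat; lra). lra.
Qed.

Lemma E2 mu (Hmu : H_mu mu) s t : 0 < s -> s <= t -> t <= 1 -> ell mu s <= ell mu t.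
Proof.
  intros H1 H2 H3. refine (ser_le _ _ _ _ _ (ell_series mu Hmu s ltac:(lra)) (ell_series mu Hmu t ltac:(lra))).
  intros n. destruct Hmu as [Hp _]. split. apply Rmult_le_pos. apply Hp. apply gg_bounds; lra.
  apply Rmult_le_compat_l. apply Hp. apply gg_mono; lra.
Qed.

Lemma E3 mu (Hmu : H_mu mu) s t : 0 < s -> s <= t -> t <= 1 -> s * ell mu t <= t * ell mu s.
Proof.
  intros H1 H2 H3.
  assert (A := is_series_scal_l s _ _ (ell_series mu Hmu t ltac:(lra))).
  assert (B := is_series_scal_l t _ _ (ell_series mu Hmu s ltac:(lra))).
  refine (ser_le _ _ _ _ _ A B).
  intros n. destruct Hmu as [Hp _]. change (0 <= s * (mu n * gg n t) <= t * (mu n * gg n s)).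
  assert (G1 := gg_bounds n t ltac:(lra)). specialize (Hp n).
  assert (R := gg_ratio n s t H1 H2 H3).
  split. apply Rmult_le_pos; [lra|apply Rmult_le_pos; lra].
  replace (s * (mu n * gg n t)) with (mu n * (s * gg n t)) by ring.
  replace (t * (mu n * gg n s)) with (mu n * (t * gg n s)) by ring.
  apply Rmult_le_compat_l; lra.
Qed.

Lemma E4 mu (Hmu : H_mu mu) : ell mu 1 < 1.
Proof.
  assert (S1 := ell_series mu Hmu 1 ltac:(lra)).
  assert (Hs2 := proj1 (proj2 (proj2 Hmu))).
  assert (Hp := proj1 Hmu).
  assert (B := is_series_plus _ _ _ _ Hs2 (is_series_scal_l (-1) _ _ S1)).
  assert (Hb : forall n, 0 <= INR n * mu n + -1 * (mu n * gg n 1)).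
  { intros n. assert (G := gg_bounds n 1 ltac:(lra)). specialize (Hp n).
    assert (mu n * gg n 1 <= mu n * INR n) by (apply Rmult_le_compat_l; lra). lra. }
  assert (P := psum_le _ _ 2 Hb B).
  rewrite sum_n_2 in P. change (plus 1 (scal (-1) (ell mu 1))) with (1 + -1 * ell mu 1) in P.
  assert (H0 := Hb 0%nat). assert (H1 := Hb 1%nat).
  assert (E : INR 2 * mu 2%nat + -1 * (mu 2%nat * gg 2 1) = mu 2%nat) by (rewrite gg2; simpl; ring).
  assert (M := mu2_pos mu Hmu). lra.
Qed.

Lemma E5 mu (Hmu : H_mu mu) d : 0 < d -> exists y0, 0 < y0 <= 1 /\ ell mu y0 <= d.
Proof.
  intros Hd. destruct Hmu as [Hp [Hs1 [Hs2 HL]]].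
  set (u := fun k => INR k * mu k) in *.
  assert (Hl : is_lim_seq (sum_n u) 1) by exact Hs2.
  apply is_lim_seq_spec in Hl.
  destruct (Hl (mkposreal (d / 2) ltac:(lra))) as [N HN].
  specialize (HN N (le_n N)). simpl in HN.
  set (w := fun k => if (k <=? N)%nat then 0 else u k).
  assert (Hw0 : forall M, (M <= N)%nat -> sum_n w M = 0).
  { induction M as [|M IH]; intros HM.
    - rewrite sum_O. unfold w. simpl. reflexivity.
    - rewrite sum_Sn. rewrite IH by lia. unfold w.
      replace (S M <=? N)%nat with true by (symmetry; apply Nat.leb_le; lia).
      change (0 + 0 = 0). ring. }
  assert (Hw : is_series w (1 - sum_n u N)).
  { apply (is_series_decr_n w (S N)). lia.
    rewrite Hw0 by lia. simpl pred.
    apply (is_series_ext (fun k => u (S N + k)%nat)).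
    { intros k. unfold w. replace (S N + k <=? N)%nat with false by (symmetry; apply Nat.leb_gt; lia). reflexivity. }
    apply (is_series_incr_n u (S N)). lia. simpl pred.
    match goal with |- is_series _ ?l => replace l with 1 end. exact Hs2.
    change (1 = 1 - sum_n u N + - 0 + sum_n u N). ring. }
  assert (HNp : 0 < INR N + 1) by (assert (0 <= INR N) by apply pos_INR; lra).
  set (s := Rmin 1 (d / (2 * (INR N + 1)))).
  assert (Hs : 0 < s <= 1).
  { unfold s. split. apply Rmin_glb_lt. lra. apply Rdiv_lt_0_compat; lra. apply Rmin_l. }
  assert (Hs' : s <= d / (2 * (INR N + 1))) by apply Rmin_r.
  assert (HNs : INR N * s <= d / 2).
  { apply Rle_trans with ((INR N + 1) * s). assert (0 <= s) by lra. nra.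
    apply Rle_trans with ((INR N + 1) * (d / (2 * (INR N + 1)))).
    apply Rmult_le_compat_l; lra. right. field. lra. }
  assert (HB := is_series_plus _ _ _ _ (is_series_scal_l (INR N * s) _ _ Hs2) Hw).
  exists s. split. exact Hs.
  assert (Hell := ell_series mu (conj Hp (conj Hs1 (conj Hs2 HL))) s Hs).
  assert (Hle : forall k, 0 <= mu k * gg k s <= plus (scal (INR N * s) (u k)) (w k)).
  { intro k. change (0 <= mu k * gg k s <= INR N * s * u k + w k).
       assert (G := gg_bounds k s ltac:(lra)). specialize (Hp k).
       assert (0 <= INR k) by apply pos_INR.
       split. apply Rmult_le_pos; lra.
       unfold w, u. destruct (k <=? N)%nat eqn:E.
       - apply Nat.leb_le in E. apply le_INR in E.
         assert (G2 := gg_small k s ltac:(lra)).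
         assert (INR k * INR k * s <= INR N * INR k * s).
         { apply Rmult_le_compat_r. lra. apply Rmult_le_compat_r; lra. }
         assert (gg k s <= INR N * s * INR k).
         { replace (INR N * s * INR k) with (INR N * INR k * s) by ring. lra. }
         assert (mu k * gg k s <= mu k * (INR N * s * INR k)) by (apply Rmult_le_compat_l; lra).
         replace (INR N * s * (INR k * mu k)) with (mu k * (INR N * s * INR k)) by ring. lra.
       - assert (mu k * gg k s <= mu k * INR k) by (apply Rmult_le_compat_l; lra).
         assert (0 <= INR N * s * (INR k * mu k)).
         { apply Rmult_le_pos. apply Rmult_le_pos. apply pos_INR. lra. apply Rmult_le_pos; lra. }
         lra. }
  assert (LE := ser_le _ _ _ _ Hle Hell HB).
  change (ell mu s <= INR N * s * 1 + (1 - sum_n u N)) in LE.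
  assert (1 - sum_n u N <= d / 2).
  { apply Rabs_def2 in HN. lra. }
  lra.
Qed.

Lemma sum_n_nonneg (a : nat -> R) N : (forall n, 0 <= a n) -> 0 <= sum_n a N.
Proof.
  intros Ha. induction N as [|N IH]. rewrite sum_O. apply Ha.
  rewrite sum_Sn. change (0 <= sum_n a N + a (S N)). specialize (Ha (S N)). lra.
Qed.

Lemma mu_le1 mu (Hmu : H_mu mu) n : mu n <= 1.
Proof.
  destruct Hmu as [Hp [Hs1 _]].
  assert (P := psum_le mu 1 n Hp Hs1).
  destruct n as [|n]. rewrite sum_O in P. exact P.
  rewrite sum_Sn in P. change (sum_n mu n + mu (S n) <= 1) in P.
  assert (Q := sum_n_nonneg mu n Hp). lra.
Qed.

Lemma E7 mu (Hmu : H_mu mu) x : 0 < x <= 1 -> continuity_pt (ell mu) x.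
Proof.
  intros Hx.
  assert (Hr : Rbar_le 1 (CV_radius mu)).
  { destruct (CV_radius_bounded mu) as [Hub _]. apply Hub. exists 1. intros n.
    rewrite pow1, Rmult_1_r. rewrite Rabs_pos_eq by apply (proj1 Hmu). apply (mu_le1 mu Hmu). }
  assert (Hc : continuity_pt (fun s => PSeries mu (1 - s)) x).
  { apply (continuity_pt_comp (fun s => 1 - s) (PSeries mu)).
    apply continuity_pt_minus. apply continuity_pt_const. intros u v; reflexivity. apply continuity_pt_id.
    apply PSeries_continuity. apply Rbar_lt_le_trans with 1. simpl.
    rewrite Rabs_pos_eq by lra. lra. exact Hr. }
  apply (continuity_pt_ext (fun s => (PSeries mu (1 - s) - (1 - s)) / s)).
  { intros s. reflexivity. }
  apply (continuity_pt_div (fun s => PSeries mu (1 - s) - (1 - s)) (fun s => s)).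
  apply (continuity_pt_minus (fun s => PSeries mu (1 - s)) (fun s => 1 - s)). exact Hc.
  apply continuity_pt_minus. apply continuity_pt_const. intros u v; reflexivity. apply continuity_pt_id.
  apply continuity_pt_id. lra.
Qed.

Lemma Q_qq mu (Hmu : H_mu mu) n : Q mu n = qq (ell mu) n.
Proof.
  induction n as [|n IH].
  - unfold Q. simpl. ring.
  - assert (Hq := qq_props (ell mu) (E1 mu Hmu) (E2 mu Hmu) (E4 mu Hmu) n).
    unfold Q in *. simpl Nat.iter. simpl qq.
    replace (Nat.iter n (G_mu mu) 0) with (1 - qq (ell mu) n) by lra.
    set (q := qq (ell mu) n) in *.
    unfold ell. field. lra.
Qed.

Theorem mainTheorem9 (mu : nat -> R) (Hmu : H_mu mu) :
  exists C : R, 0 < C /\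
    forall (n : nat) (y : R), (1 <= n)%nat -> 0 < y <= 1 -> V_star mu y = INR n ->
      INR n < V_star mu (Q mu n) < INR n - C * ln y.
Proof.
  destruct (abstract_main (ell mu) (E1 mu Hmu) (E2 mu Hmu) (E3 mu Hmu) (E4 mu Hmu)
              (E5 mu Hmu) (E7 mu Hmu)) as [C [HC H]].
  exists C. split. exact HC.
  intros n y Hn Hy HV. rewrite Q_qq by exact Hmu.
  apply H; auto.
Qed.
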